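(* In the setting described in the context (in particular, the modified 4-player stage game is $\alpha$-strongly monotone for some $\alpha>0$, so every stage game has a unique RQE), suppose the risk-averse quantal-response Bellman operator $\mathcal{T}$ has a unique fixed point $\mathbf{Q}^*$. Define the Markov policy $\pi^*$ state-wise by letting $\pi^*(\cdot\mid s)$ be the unique RQE of the stage game with payoff matrix pair $\mathbf{Q}^*(s,\cdot)$. Then $\pi^*$ is a stationary Markov RQE of the Markov game.
   Context: A discounted two-player Markov game has a finite state space $\mathcal{S}$, finite action sets $\mathcal{A}_1,\mathcal{A}_2$ with $\mathcal{A}=\mathcal{A}_1\times\mathcal{A}_2$, deterministic rewards $r_i:\mathcal{S}\times\mathcal{A}\to[0,1]$, discount factor $\gamma\in[0,1)$ and transition kernel $P(\cdot\mid s,\mathbf{a})\in\Delta_{\mathcal{S}}$; $-i$ denotes the other player, $\Delta_n$ the probability simplex in $\mathbb{R}^n$. For each $i$ fix $\epsilon_i>0$, a differentiable strictly convex $\nu_i$ on (a neighbourhood of) $\Delta_{|\mathcal{A}_i|}$, a differentiable $D_i:\Delta_{|\mathcal{A}_{-i}|}\times\Delta_{|\mathcal{A}_{-i}|}\to\mathbb{R}$ convex in its first argument, and an environment penalty $D_i^{\mathrm{env}}:\Delta_{\mathcal{S}}\times\Delta_{\mathcal{S}}\to[0,\infty)$. Stage games: for $\mathbf{R}=(R_1,R_2)$, $R_i\in\mathbb{R}^{|\mathcal{A}_i|\times|\mathcal{A}_{-i}|}$, let $f_i(\pi_i,\pi_{-i};R_i)=\sup_{p_i\in\Delta_{|\mathcal{A}_{-i}|}}[-\pi_i^TR_ip_i-D_i(p_i,\pi_{-i})]+\epsilon_i\nu_i(\pi_i)$;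 an RQE is $(\pi_1^*,\pi_2^* )$ with $f_i(\pi_i^*,\pi_{-i}^*;R_i)\le f_i(\pi_i,\pi_{-i}^*;R_i)$ for all $\pi_i$, $i=1,2$, and for the unique RQE $\texttt{RQE}_i(\mathbf{R}):=f_i(\pi_i^*,\pi_{-i}^*;R_i)$. The modified 4-player game with $z=(\pi_1,\pi_2,p_1,p_2)\in\mathcal{Z}=\Delta_{|\mathcal{A}_1|}\times\Delta_{|\mathcal{A}_2|}\times\Delta_{|\mathcal{A}_2|}\times\Delta_{|\mathcal{A}_1|}$ has gradient operator $F(z;\mathbf{R})=(-R_1p_1+\epsilon_1\nabla\nu_1(\pi_1),\,-R_2p_2+\epsilon_2\nabla\nu_2(\pi_2),\,R_1^T\pi_1+\nabla_{p_1}D_1(p_1,\pi_2),\,R_2^T\pi_2+\nabla_{p_2}D_2(p_2,\pi_1))$ and is $\alpha$-strongly monotone if $(z-z')^T(F(z;\mathbf{R})-F(z';\mathbf{R}))\ge\alpha\|z-z'\|_2^2$ for all $z,z'$ (independent of $\mathbf{R}$). For a $Q$ function pair $\mathbf{Q}=(Q_1,Q_2)$, $Q_i:\mathcal{S}\times\mathcal{A}\to\mathbb{R}$, $\mathbf{Q}(s,\cdot)$ is the stage payoff pair with $[Q_i(s,\cdot)]_{mn}=Q_i(s,(a_i=m,a_{-i}=n))$, and $(\mathcal{T}\mathbf{Q})_i(s,\mathbf{a})=r_i(s,\mathbf{a})+\gamma\inf_{\widetilde P\in\Delta_{\mathcal{S}}}\{-\mathbb{E}_{s'\sim\widetilde P}[\texttt{RQE}_i(\mathbf{Q}(s',\cdot))]+D_i^{\mathrm{env}}(\widetilde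 P,P(\cdot\mid s,\mathbf{a}))\}$. For a Markov policy pair $\pi=(\pi_1,\pi_2)$, $\pi_i:\mathcal{S}\to\Delta_{|\mathcal{A}_i|}$, the value and $Q$ functions $V_i^{\epsilon_i,\pi}$, $Q_i^{\epsilon_i,\pi}$ are defined jointly by $V_i^{\epsilon_i,\pi}(s)=-f_i(\pi_i(s),\pi_{-i}(s);Q_i^{\epsilon_i,\pi}(s,\cdot))$ and $Q_i^{\epsilon_i,\pi}(s,\mathbf{a})=r_i(s,\mathbf{a})+\gamma\inf_{\widetilde P\in\Delta_{\mathcal{S}}}\{\mathbb{E}_{s'\sim\widetilde P}V_i^{\epsilon_i,\pi}(s')+D_i^{\mathrm{env}}(\widetilde P,P(\cdot\mid s,\mathbf{a}))\}$. A pair $\pi^*$ is a stationary Markov RQE if for both $i$ and all $s\in\mathcal{S}$, $V_i^{\epsilon_i,\pi^*}(s)\ge V_i^{\epsilon_i,(\pi_i,\pi_{-i}^* )}(s)$ for every Markov policy $\pi_i:\mathcal{S}\to\Delta_{|\mathcal{A}_i|}$. *)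

(* Defs.v *)
From HB Require Import structures.
From mathcomp Require Import all_boot all_order all_algebra.
From mathcomp Require Import all_classical all_reals all_analysis.
Set Implicit Arguments. Unset Strict Implicit. Unset Printing Implicit Defensive.
Import Order.TTheory GRing.Theory Num.Theory.
Import numFieldNormedType.Exports.
Local Open Scope classical_set_scope.
Local Open Scope ring_scope.

Section Defs.
Variable R : realType.

Definition simplex (n : nat) : set 'rV[R]_n :=
  [set p | (forall j, 0 <= p 0 j) /\ \sum_j p 0 j = 1].
Arguments simplex : clear implicits.

Definition distr (S : finType) : set (S -> R) :=
  [set p | (forall s, 0 <= p s) /\ \sum_s p s = 1].
Arguments distr : clear implicits.

Definition grad (n : nat) (f : 'rV[R]_n -> R) (x : 'rV[R]_n) : 'rV[R]_n :=
  \row_j ('d f x) (delta_mx 0 j).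

Definition dotv (n : nat) (u v : 'rV[R]_n) : R := \sum_j u 0 j * v 0 j.

Record stage_params (m1 m2 : nat) := StageParams {
  eps1 : R; eps2 : R;
  nu1 : 'rV[R]_m1 -> R; nu2 : 'rV[R]_m2 -> R;
  D1 : 'rV[R]_m2 -> 'rV[R]_m2 -> R;
  D2 : 'rV[R]_m1 -> 'rV[R]_m1 -> R }.

Definition fval (m n : nat) (eps : R) (nu : 'rV[R]_m -> R)
  (D : 'rV[R]_n -> 'rV[R]_n -> R) (pi : 'rV[R]_m) (pio : 'rV[R]_n)
  (Rm : 'M[R]_(m, n)) : R :=
  sup [set - (pi *m Rm *m p^T) 0 0 - D p pio | p in simplex n] + eps * nu pi.

Definition f1 m1 m2 (G : stage_params m1 m2) pi1 pi2 (R1 : 'M[R]_(m1, m2)) :=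
  fval (eps1 G) (nu1 G) (D1 G) pi1 pi2 R1.
Definition f2 m1 m2 (G : stage_params m1 m2) pi2 pi1 (R2 : 'M[R]_(m2, m1)) :=
  fval (eps2 G) (nu2 G) (D2 G) pi2 pi1 R2.

Definition isRQE m1 m2 (G : stage_params m1 m2)
  (R1 : 'M[R]_(m1, m2)) (R2 : 'M[R]_(m2, m1)) (pi1 : 'rV[R]_m1) (pi2 : 'rV[R]_m2) :=
  [/\ simplex m1 pi1, simplex m2 pi2,
      (forall p1, simplex m1 p1 -> f1 G pi1 pi2 R1 <= f1 G p1 pi2 R1) &
      (forall p2, simplex m2 p2 -> f2 G pi2 pi1 R2 <= f2 G p2 pi1 R2)].

(* The RQE of the stage game (chosen; it is unique under strong monotonicity).
   If none exists a junk value is returned (never used under the hypotheses). *)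
Definition rqe_pair m1 m2 (G : stage_params m1 m2)
  (R1 : 'M[R]_(m1, m2)) (R2 : 'M[R]_(m2, m1)) : 'rV[R]_m1 * 'rV[R]_m2 :=
  match pselect (exists z : 'rV[R]_m1 * 'rV[R]_m2, isRQE G R1 R2 z.1 z.2) with
  | left H => proj1_sig (cid H)
  | right _ => (0, 0)
  end.

Definition RQE1 m1 m2 (G : stage_params m1 m2) R1 R2 : R :=
  f1 G (rqe_pair G R1 R2).1 (rqe_pair G R1 R2).2 R1.
Definition RQE2 m1 m2 (G : stage_params m1 m2) R1 R2 : R :=
  f2 G (rqe_pair G R1 R2).2 (rqe_pair G R1 R2).1 R2.

(* Gradient operator F of the modified 4-player game, z = (pi1, pi2, p1, p2). *)
Definition Fop m1 m2 (G : stage_params m1 m2)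
  (R1 : 'M[R]_(m1, m2)) (R2 : 'M[R]_(m2, m1))
  (pi1 : 'rV[R]_m1) (pi2 : 'rV[R]_m2) (p1 : 'rV[R]_m2) (p2 : 'rV[R]_m1) :
  'rV[R]_m1 * 'rV[R]_m2 * 'rV[R]_m2 * 'rV[R]_m1 :=
  ( - (p1 *m R1^T) + eps1 G *: grad (nu1 G) pi1,
    - (p2 *m R2^T) + eps2 G *: grad (nu2 G) pi2,
    pi1 *m R1 + grad (fun x => D1 G x pi2) p1,
    pi2 *m R2 + grad (fun x => D2 G x pi1) p2).

Definition strongly_monotone m1 m2 (G : stage_params m1 m2) (alpha : R) :=
  forall (R1 : 'M[R]_(m1, m2)) (R2 : 'M[R]_(m2, m1))
         pi1 pi2 p1 p2 pi1' pi2' p1' p2',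
  simplex m1 pi1 -> simplex m2 pi2 -> simplex m2 p1 -> simplex m1 p2 ->
  simplex m1 pi1' -> simplex m2 pi2' -> simplex m2 p1' -> simplex m1 p2' ->
  let: (F1, F2, F3, F4) := Fop G R1 R2 pi1 pi2 p1 p2 in
  let: (F1', F2', F3', F4') := Fop G R1 R2 pi1' pi2' p1' p2' in
  alpha * (dotv (pi1 - pi1') (pi1 - pi1') + dotv (pi2 - pi2') (pi2 - pi2')
           + dotv (p1 - p1') (p1 - p1') + dotv (p2 - p2') (p2 - p2'))
  <= dotv (pi1 - pi1') (F1 - F1') + dotv (pi2 - pi2') (F2 - F2')
     + dotv (p1 - p1') (F3 - F3') + dotv (p2 - p2') (F4 - F4').

Record markov_params (S : finType) (m1 m2 : nat) := MarkovParams {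
  rew1 : S -> 'I_m1 -> 'I_m2 -> R;
  rew2 : S -> 'I_m1 -> 'I_m2 -> R;
  gamma : R;
  trans : S -> 'I_m1 -> 'I_m2 -> S -> R;
  Denv1 : (S -> R) -> (S -> R) -> R;
  Denv2 : (S -> R) -> (S -> R) -> R }.

Definition Qmat1 (S : finType) m1 m2 (Q : S -> 'I_m1 -> 'I_m2 -> R) s
  : 'M[R]_(m1, m2) := \matrix_(a1 < m1, a2 < m2) Q s a1 a2.
Definition Qmat2 (S : finType) m1 m2 (Q : S -> 'I_m1 -> 'I_m2 -> R) s
  : 'M[R]_(m2, m1) := \matrix_(a2 < m2, a1 < m1) Q s a1 a2.

Definition expect (S : finType) (p : S -> R) (V : S -> R) : R :=
  \sum_s p s * V s.

Definition robust_exp (S : finType) (Denv : (S -> R) -> (S -> R) -> R)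
  (P0 : S -> R) (W : S -> R) : R :=
  inf [set expect Pt W + Denv Pt P0 | Pt in distr S].

Definition bellman (S : finType) m1 m2 (G : stage_params m1 m2)
  (M : markov_params S m1 m2) (Q1 Q2 : S -> 'I_m1 -> 'I_m2 -> R) :
  (S -> 'I_m1 -> 'I_m2 -> R) * (S -> 'I_m1 -> 'I_m2 -> R) :=
  (fun s a1 a2 => rew1 M s a1 a2 + gamma M *
     robust_exp (Denv1 M) (trans M s a1 a2)
       (fun s' => - RQE1 G (Qmat1 Q1 s') (Qmat2 Q2 s')),
   fun s a1 a2 => rew2 M s a1 a2 + gamma M *
     robust_exp (Denv2 M) (trans M s a1 a2)
       (fun s' => - RQE2 G (Qmat1 Q1 s') (Qmat2 Q2 s'))).

Definition is_VQ1 (S : finType) m1 m2 (G : stage_params m1 m2)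
  (M : markov_params S m1 m2) (pi1 : S -> 'rV[R]_m1) (pi2 : S -> 'rV[R]_m2)
  (V : S -> R) (Q : S -> 'I_m1 -> 'I_m2 -> R) :=
  (forall s, V s = - f1 G (pi1 s) (pi2 s) (Qmat1 Q s)) /\
  (forall s a1 a2, Q s a1 a2 =
     rew1 M s a1 a2 + gamma M * robust_exp (Denv1 M) (trans M s a1 a2) V).

Definition is_VQ2 (S : finType) m1 m2 (G : stage_params m1 m2)
  (M : markov_params S m1 m2) (pi1 : S -> 'rV[R]_m1) (pi2 : S -> 'rV[R]_m2)
  (V : S -> R) (Q : S -> 'I_m1 -> 'I_m2 -> R) :=
  (forall s, V s = - f2 G (pi2 s) (pi1 s) (Qmat2 Q s)) /\
  (forall s a1 a2, Q s a1 a2 =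
     rew2 M s a1 a2 + gamma M * robust_exp (Denv2 M) (trans M s a1 a2) V).

Definition markov_policy (S : finType) (m : nat) (pi : S -> 'rV[R]_m) :=
  forall s, simplex m (pi s).

Definition markov_RQE (S : finType) m1 m2 (G : stage_params m1 m2)
  (M : markov_params S m1 m2) (pi1 : S -> 'rV[R]_m1) (pi2 : S -> 'rV[R]_m2) :=
  markov_policy pi1 /\ markov_policy pi2 /\
  (forall pi1', markov_policy pi1' ->
     forall V Q V' Q', is_VQ1 G M pi1 pi2 V Q -> is_VQ1 G M pi1' pi2 V' Q' ->
     forall s, V' s <= V s) /\
  (forall pi2', markov_policy pi2' ->
     forall V Q V' Q', is_VQ2 G M pi1 pi2 V Q -> is_VQ2 G M pi1 pi2' V' Q' ->
     forall s, V' s <= V s).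

Definition strictly_convex_on (n : nat) (A : set 'rV[R]_n) (g : 'rV[R]_n -> R) :=
  forall x y t, A x -> A y -> x != y -> 0 < t < 1 ->
    g (t *: x + (1 - t) *: y) < t * g x + (1 - t) * g y.

Definition convex_first_on (n : nat) (A : set 'rV[R]_n) (D : 'rV[R]_n -> 'rV[R]_n -> R) :=
  forall x y q t, A x -> A y -> A q -> 0 <= t <= 1 ->
    D (t *: x + (1 - t) *: y) q <= t * D x q + (1 - t) * D y q.

Definition diff_nbhd (n : nat) (A : set 'rV[R]_n) (g : 'rV[R]_n -> R) :=
  exists U : set 'rV[R]_n, [/\ open U, A `<=` U & forall x, U x -> differentiable g x].

Definition diff_on2 (n : nat) (A : set 'rV[R]_n) (D : 'rV[R]_n -> 'rV[R]_n -> R) :=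
  forall p q, A p -> A q ->
    differentiable (fun z : 'rV[R]_n * 'rV[R]_n => D z.1 z.2) (p, q).

End Defs.
Arguments simplex : clear implicits.
Arguments distr : clear implicits.

(* Main.v *)
Require Import Defs.
From HB Require Import structures.
From mathcomp Require Import all_boot all_order all_algebra.
From mathcomp Require Import all_classical all_reals all_analysis.
From mathcomp Require Import ring lra.
Import Order.TTheory GRing.Theory Num.Theory.
Import numFieldNormedType.Exports.
Local Open Scope classical_set_scope.
Local Open Scope ring_scope.
Set Implicit Arguments. Unset Strict Implicit. Unset Printing Implicit Defensive.
Section P1.
Variable R : realType.

Lemma dotvC n (u v : 'rV[R]_n) : dotv u v = dotv v u.
Proof. by apply: eq_bigr => j _; rewrite mulrC. Qed.
Lemma dotvDr n (u v w : 'rV[R]_n) : dotv u (v + w) = dotv u v + dotv u w.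
Proof. by rewrite /dotv -big_split; apply: eq_bigr => j _; rewrite mxE mulrDr. Qed.
Lemma dotvDl n (u v w : 'rV[R]_n) : dotv (v + w) u = dotv v u + dotv w u.
Proof. by rewrite dotvC dotvDr !(dotvC u). Qed.
Lemma dotvNr n (u v : 'rV[R]_n) : dotv u (- v) = - dotv u v.
Proof. by rewrite /dotv -sumrN; apply: eq_bigr => j _; rewrite mxE mulrN. Qed.
Lemma dotvNl n (u v : 'rV[R]_n) : dotv (- u) v = - dotv u v.
Proof. by rewrite dotvC dotvNr dotvC. Qed.
Lemma dotvBr n (u v w : 'rV[R]_n) : dotv u (v - w) = dotv u v - dotv u w.
Proof. by rewrite dotvDr dotvNr. Qed.
Lemma dotvBl n (u v w : 'rV[R]_n) : dotv (v - w) u = dotv v u - dotv w u.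
Proof. by rewrite dotvDl dotvNl. Qed.
Lemma dotvZr n a (u v : 'rV[R]_n) : dotv u (a *: v) = a * dotv u v.
Proof. by rewrite /dotv mulr_sumr; apply: eq_bigr => j _; rewrite mxE mulrCA. Qed.
Lemma dotvZl n a (u v : 'rV[R]_n) : dotv (a *: u) v = a * dotv u v.
Proof. by rewrite dotvC dotvZr dotvC. Qed.
Lemma dotv0r n (u : 'rV[R]_n) : dotv u 0 = 0.
Proof. by rewrite /dotv big1 // => j _; rewrite mxE mulr0. Qed.
Lemma dotv0l n (u : 'rV[R]_n) : dotv 0 u = 0.
Proof. by rewrite dotvC dotv0r. Qed.
Lemma dotv_ge0 n (u : 'rV[R]_n) : 0 <= dotv u u.
Proof. by apply: sumr_ge0 => j _; rewrite -expr2 sqr_ge0. Qed.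
Lemma dotv_eq0 n (u : 'rV[R]_n) : dotv u u = 0 -> u = 0.
Proof.
rewrite /dotv => /eqP; rewrite psumr_eq0; last by move=> j _; rewrite -expr2 sqr_ge0.
move=> /allP H; apply/rowP => j; rewrite mxE.
by have /(_ (mem_index_enum j)) := H j; rewrite implyTb mulf_eq0 orbb => /eqP.
Qed.

Lemma mulmx00 m n (pi : 'rV[R]_m) (Rm : 'M[R]_(m, n)) (p : 'rV[R]_n) :
  (pi *m Rm *m p^T) 0 0 = dotv (pi *m Rm) p.
Proof. by rewrite [LHS]mxE /dotv; apply: eq_bigr => j _; rewrite [p^T _ _]mxE. Qed.

Lemma mulmx00E m n (pi : 'rV[R]_m) (Rm : 'M[R]_(m, n)) (p : 'rV[R]_n) :
  (pi *m Rm *m p^T) 0 0 = \sum_i \sum_j pi 0 i * Rm i j * p 0 j.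
Proof.
rewrite mulmx00 /dotv exchange_big /=; apply: eq_bigr => j _.
by rewrite mxE mulr_suml.
Qed.

Lemma dotv_mulTr m n (d : 'rV[R]_m) (Rm : 'M[R]_(m, n)) (p : 'rV[R]_n) :
  dotv d (p *m Rm^T) = dotv (d *m Rm) p.
Proof.
rewrite /dotv; under eq_bigr do rewrite mxE mulr_sumr.
rewrite exchange_big /=; apply: eq_bigr => j _; rewrite [(d *m Rm) 0 j]mxE mulr_suml.
by apply: eq_bigr => i _; rewrite mxE; ring.
Qed.

Lemma simplex_conv n (p q : 'rV[R]_n) t : simplex R n p -> simplex R n q ->
  0 <= t <= 1 -> simplex R n (p + t *: (q - p)).
Proof.
move=> [p0 p1] [q0 q1] /andP[t0 t1]; split.
  move=> j; rewrite !mxE.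
  have -> : p 0 j + t * (q 0 j + - p 0 j) = (1 - t) * p 0 j + t * q 0 j by ring.
  by apply: addr_ge0; apply: mulr_ge0 => //; rewrite subr_ge0.
under eq_bigr do rewrite !mxE.
rewrite big_split /= -mulr_sumr big_split /= sumrN p1 q1; ring.
Qed.

Lemma simplex_ge0 n (p : 'rV[R]_n) j : simplex R n p -> 0 <= p 0 j.
Proof. by case. Qed.
Lemma simplex_le1 n (p : 'rV[R]_n) j : simplex R n p -> p 0 j <= 1.
Proof.
move=> [p0 <-]; rewrite (bigD1 j) //= lerDl; exact: sumr_ge0.
Qed.

End P1.
Section P2.
Variable R : realType.

Lemma simplex_closed n : closed (simplex R n).
Proof.
have -> : simplex R n = (\bigcap_(j in setT) [set p : 'rV[R]_n | 0 <= p 0 j])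
   `&` ((fun p : 'rV[R]_n => \sum_j p 0 j) @^-1` [set x | x = 1]).
  apply/seteqP; split => p /=.
    by move=> [H1 H2]; split => // j _; exact: H1.
  by move=> [H1 H2]; split => // j; exact: H1.
apply: closedI.
  apply: closed_bigI => j _.
  apply: (@preimage_closed _ _ (fun p : 'rV[R]_n => p 0 j) [set x | 0 <= x]).
    by move=> x _; apply: coord_continuous.
  exact: closed_ge.
apply: preimage_closed; last exact: closed_eq.
move=> x _; apply: differentiable_continuous.
have -> : (fun p : 'rV[R]_n => \sum_j p 0 j) = \sum_(j < n) (fun p : 'rV[R]_n => p 0 j).
  by apply/funext => p; rewrite fct_sumE.
by apply: differentiable_sum => j; apply: differentiable_coord.
Qed.

Lemma simplex_bounded n : bounded_set (simplex R n).
Proof.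
rewrite /= /bounded_near; near=> M => x Ax /=.
rewrite [leLHS]/Num.norm /= mx_normrE; apply: bigmax_le.
  by near: M; apply: nbhs_pinfty_ge; rewrite num_real.
move=> [i j] _ /=; rewrite (ord1 i) ger0_norm; last exact: simplex_ge0.
apply: (le_trans (simplex_le1 j Ax)).
by near: M; apply: nbhs_pinfty_ge; rewrite num_real.
Unshelve. all: by end_near.
Qed.

Lemma simplex_compact n : compact (simplex R n).
Proof. by apply: bounded_closed_compact; [exact: simplex_bounded | exact: simplex_closed]. Qed.

End P2.
Section P3.
Variable R : realType.

Lemma diff_partial n m (D : 'rV[R]_n -> 'rV[R]_m -> R) p q :
  differentiable (fun z : 'rV[R]_n * 'rV[R]_m => D z.1 z.2) (p, q) ->
  differentiable (fun x => D x q) p.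
Proof.
move=> dD.
have -> : (fun x => D x q) = (fun z : 'rV[R]_n * 'rV[R]_m => D z.1 z.2) \o (fun x => (x, q)).
  by [].
by apply: differentiable_comp.
Qed.

Lemma diff_dotv n (c : 'rV[R]_n) p : differentiable (fun x => dotv c x) p.
Proof.
have -> : (fun x => dotv c x) = \sum_(j < n) (c 0 j *: (fun x : 'rV[R]_n => x 0 j)).
  by apply/funext => x; rewrite fct_sumE; apply: eq_bigr => j _.
apply: differentiable_sum => j; apply: differentiableZ; exact: differentiable_coord.
Qed.

Lemma exists_max n (c : 'rV[R]_n) (Dq : 'rV[R]_n -> R) :
  simplex R n !=set0 -> (forall p, simplex R n p -> differentiable Dq p) ->
  exists2 p, simplex R n p &
    forall p', simplex R n p' -> - dotv c p' - Dq p' <= - dotv c p - Dq p.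
Proof.
move=> ne dD.
have cont : {within simplex R n, continuous (fun p => - dotv c p - Dq p)}.
  apply: continuous_in_subspaceT => x; rewrite inE => xin.
  apply: differentiable_continuous.
  apply: differentiableB; last exact: dD.
  apply: differentiableN; exact: diff_dotv.
have [p pin pmax] := EVT_max_rV ne (@simplex_compact R n) cont.
exists p; first by rewrite inE in pin.
by move=> p' p'in; apply: pmax; rewrite inE.
Qed.

Lemma deriv_lb n (g : 'rV[R]_n -> R) x d a K : differentiable g x ->
  (forall t, 0 < t < 1 -> t * a - K * t ^+ 2 <= g (x + t *: d) - g x) ->
  a <= 'd g x d.
Proof.
move=> dg H.
have der := diff_derivable (v := d) dg.
rewrite -deriveE //.
set f := (fun h : R => h^-1 *: ((g \o shift x) (h *: d) - g x)) in der.
have der' : f @ 0^'+ --> 'D_d g x.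
  move=> A /der /nbhs_ballP [e e0 eA].
  exists e => // y y0e y0; apply: eA => //.
  by rewrite gt_eqF.
have Kc : (fun h : R => K * h) @ 0^'+ --> K * 0.
  apply: cvgMl_tmp; apply: cvg_at_right_filter; exact: cvg_id.
have cv : (f + (fun h => K * h)) @ 0^'+ --> 'D_d g x + K * 0 by apply: cvgD.
rewrite mulr0 addr0 in cv.
suff HH : \forall h \near 0^'+, [set y | a <= y] ((f + (fun h => K * h)) h).
  exact: (closed_cvg _ (@closed_ge _ a) HH _ cv).
near=> h => /=.
have h0 : 0 < h by near: h; exact: nbhs_right_gt.
have h1 : h < 1 by near: h; exact: nbhs_right_lt.
have := H h; rewrite h0 h1 => /(_ isT) Hh.
rewrite /f /= addrC.
change (a <= K * h + h^-1 *: (g (h *: d + x) - g x)); rewrite [_ + x]addrC.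
have E : h^-1 *: (g (x + h *: d) - g x) = h^-1 * (g (x + h *: d) - g x) by [].
rewrite E.
have E2 : h^-1 * (h * a - K * h ^+ 2) = a - K * h.
  by field; rewrite gt_eqF.
have hi : 0 <= h^-1 by rewrite invr_ge0 ltW.
have := ler_wpM2l hi Hh.
rewrite E2 => HH; lra.
Unshelve. all: by end_near.
Qed.

Lemma dotv_grad n (g : 'rV[R]_n -> R) x d : differentiable g x ->
  dotv d (grad g x) = 'd g x d.
Proof.
move=> dg.
rewrite [in RHS](row_sum_delta d) linear_sum /dotv; apply: eq_bigr => j _.
by rewrite linearZ /= !mxE.
Qed.
End P3.
Section SC.
Variable R : realType.
Lemma scalar_step (alpha eps t X Y N A B C Bp G1 G2 : R) :
  0 < alpha -> 0 < eps -> 0 < t ->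
  0 <= Bp + G1 -> 0 <= - (Bp + t * B + G2) -> alpha * A <= G2 - G1 ->
  0 <= alpha ^+ 2 * A + 2 * alpha * t * B + t ^+ 2 * C ->
  t * Y <= eps * N -> Y = X + B ->
  t * (X / eps) - C / (alpha * eps) * t ^+ 2 <= N.
Proof.
move=> a0 e0 t0 HB HC HE Hsq HA HY.
have HAa : alpha * A <= - (t * B) by lra.
have H1 : alpha * (alpha * A) <= alpha * (- (t * B)) by rewrite ler_pM2l.
have H2 : - (t ^+ 2 * C) <= alpha * t * B.
  move: Hsq H1; rewrite !expr2; lra.
have H3 : 0 <= alpha * (eps * N - t * Y).
  by apply: mulr_ge0; [exact: ltW | lra].
rewrite -subr_ge0.
have -> : N - (t * (X / eps) - C / (alpha * eps) * t ^+ 2)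
   = (alpha * (eps * N) - alpha * t * X + C * t ^+ 2) / (alpha * eps).
  by field; rewrite ?gt_eqF.
apply: divr_ge0; last by apply: mulr_ge0; exact: ltW.
move: H3 H2; rewrite HY; lra.
Qed.
End SC.
Section P4.
Variable R : realType.

Lemma dotv_comb n (a b : R) (u v : 'rV[R]_n) :
  dotv (a *: u + b *: v) (a *: u + b *: v) =
  a ^+ 2 * dotv u u + 2 * a * b * dotv u v + b ^+ 2 * dotv v v.
Proof. by rewrite !dotvDl !dotvDr !dotvZl !dotvZr (dotvC v u); ring. Qed.

Lemma fval_max m n (eps : R) (nu : 'rV[R]_m -> R) (D : 'rV[R]_n -> 'rV[R]_n -> R)
  (pi : 'rV[R]_m) (q : 'rV[R]_n) (Rm : 'M[R]_(m, n)) p :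
  simplex R n p ->
  (forall p', simplex R n p' -> - dotv (pi *m Rm) p' - D p' q <= - dotv (pi *m Rm) p - D p q) ->
  fval eps nu D pi q Rm = - dotv (pi *m Rm) p - D p q + eps * nu pi.
Proof.
move=> pin pmax; rewrite /fval; congr (_ + _).
set E := [set _ | _ in _].
have Ep : E (- dotv (pi *m Rm) p - D p q) by exists p => //; rewrite mulmx00.
have ub : ubound E (- dotv (pi *m Rm) p - D p q).
  by move=> y [p' p'in <-]; rewrite mulmx00; exact: pmax.
apply/eqP; rewrite eq_le; apply/andP; split.
  by apply: ge_sup => //; exists (- dotv (pi *m Rm) p - D p q).
by apply: sup_upper_bound => //; split; [exists (- dotv (pi *m Rm) p - D p q) | exists (- dotv (pi *m Rm) p - D p q)].
Qed.

Lemma pVI n (c : 'rV[R]_n) (Dq : 'rV[R]_n -> R) p :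
  simplex R n p ->
  (forall p', simplex R n p' -> - dotv c p' - Dq p' <= - dotv c p - Dq p) ->
  differentiable Dq p ->
  forall p', simplex R n p' -> 0 <= dotv (p' - p) (c + grad Dq p).
Proof.
move=> pin pmax dD p' p'in.
rewrite dotvDr dotv_grad // dotvC.
suff : - dotv c (p' - p) <= 'd Dq p (p' - p) by lra.
apply: (deriv_lb (K := 0)) => // t /andP[t0 t1].
have t01 : 0 <= t <= 1 by rewrite !ltW.
have := pmax _ (simplex_conv pin p'in t01).
rewrite dotvDr dotvZr; lra.
Qed.

Lemma player_VI m n (eps : R) (nu : 'rV[R]_m -> R) (D : 'rV[R]_n -> 'rV[R]_n -> R)
  alpha (Rm : 'M[R]_(m, n)) pi q :
  0 < alpha -> 0 < eps -> simplex R m pi -> simplex R n q ->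
  (forall x, simplex R m x -> differentiable nu x) ->
  (forall p, simplex R n p -> differentiable (fun x => D x q) p) ->
  (forall p p', simplex R n p -> simplex R n p' ->
     alpha * dotv (p - p') (p - p') <=
     dotv (p - p') (grad (fun x => D x q) p - grad (fun x => D x q) p')) ->
  (forall pi', simplex R m pi' -> fval eps nu D pi q Rm <= fval eps nu D pi' q Rm) ->
  exists2 p, simplex R n p &
    (forall p', simplex R n p' -> 0 <= dotv (p' - p) (pi *m Rm + grad (fun x => D x q) p)) /\
    (forall pi', simplex R m pi' -> 0 <= dotv (pi' - pi) (- (p *m Rm^T) + eps *: grad nu pi)).
Proof.
move=> a0 e0 piin qin dnu dD smon rqe.
have ne : simplex R n !=set0 by exists q.
have exm : forall pp : 'rV[R]_m, exists2 p, simplex R n p &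
    forall p', simplex R n p' -> - dotv (pp *m Rm) p' - D p' q <= - dotv (pp *m Rm) p - D p q.
  by move=> pp; apply: exists_max.
have [p pin pmax] := exm pi.
exists p => //; split.
  by apply: pVI => //; exact: dD.
move=> pi' pi'in.
set d := pi' - pi.
rewrite dotvDr dotvNr dotv_mulTr dotvZr dotv_grad; last exact: dnu.
set v := d *m Rm.
suff : dotv v p / eps <= 'd nu pi d.
  rewrite ler_pdivrMr // => H; rewrite mulrC; lra.
apply: (deriv_lb (K := dotv v v / (alpha * eps))); first exact: dnu.
move=> t /andP[t0 t1].
have t01 : 0 <= t <= 1 by rewrite !ltW.
have ptin := simplex_conv piin pi'in t01.
set pt := pi + t *: (pi' - pi) in ptin.
have [p_t p_tin p_tmax] := exm pt.
have F1 := fval_max eps nu pin pmax.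
have F2 := fval_max eps nu p_tin p_tmax.
have Hr := rqe _ ptin.
rewrite F1 F2 in Hr.
have Hm := pmax _ p_tin.
have ptR : pt *m Rm = pi *m Rm + t *: v by rewrite mulmxDl -scalemxAl.
have HA : t * dotv v p_t <= eps * (nu pt - nu pi).
  move: Hr Hm; rewrite ptR dotvDl dotvZl (dotvC v); lra.
have HB := pVI pin pmax (dD _ pin) p_tin.
have HC := pVI p_tin p_tmax (dD _ p_tin) pin.
have HE := smon _ _ p_tin pin.
set u := p_t - p in HB HE.
have Eu : p - p_t = - u by rewrite /u opprB.
rewrite Eu in HC.
move: HC; rewrite dotvNl ptR !dotvDr dotvZr => HC.
move: HB; rewrite !dotvDr => HB.
move: HE; rewrite dotvBr => HE.
have Hsq := dotv_ge0 (alpha *: u + t *: v).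
rewrite dotv_comb in Hsq.
have HY : dotv v p_t = dotv v p + dotv u v by rewrite (dotvC u v) /u dotvBr addrCA subrr addr0.
rewrite /d -/pt.
exact: (scalar_step a0 e0 t0 HB HC HE Hsq HA HY).
Qed.

End P4.
Section P5.
Variable R : realType.

Lemma dotv_simp n (u a b : 'rV[R]_n) : dotv u (0 + a - (0 + b)) = dotv u (a - b).
Proof. by rewrite !add0r. Qed.

Lemma diff_nbhd_at n (A : set 'rV[R]_n) g : diff_nbhd A g -> forall x, A x -> differentiable g x.
Proof. by move=> [U [_ AU dU]] x Ax; apply: dU; apply: AU. Qed.

Lemma diff_on2_at n (A : set 'rV[R]_n) D : diff_on2 A D -> forall q, A q -> forall p, A p ->
  differentiable (fun x => D x q) p.
Proof. by move=> dD q qA p pA; apply: diff_partial; apply: dD. Qed.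

Lemma smon_p1 m1 m2 (G : stage_params R m1 m2) alpha x1 q :
  strongly_monotone G alpha -> simplex R m1 x1 -> simplex R m2 q ->
  forall p p', simplex R m2 p -> simplex R m2 p' ->
  alpha * dotv (p - p') (p - p') <=
  dotv (p - p') (grad (fun x => D1 G x q) p - grad (fun x => D1 G x q) p').
Proof.
move=> SM x1in qin p p' pin p'in.
have := SM 0 0 x1 q p x1 x1 q p' x1 x1in qin pin x1in x1in qin p'in x1in.
cbv beta iota delta [Fop].
rewrite (subrr x1) (subrr q) !dotv0l mulmx0 dotv_simp; lra.
Qed.

Lemma smon_p2 m1 m2 (G : stage_params R m1 m2) alpha x2 q :
  strongly_monotone G alpha -> simplex R m2 x2 -> simplex R m1 q ->
  forall p p', simplex R m1 p -> simplex R m1 p' ->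
  alpha * dotv (p - p') (p - p') <=
  dotv (p - p') (grad (fun x => D2 G x q) p - grad (fun x => D2 G x q) p').
Proof.
move=> SM x2in qin p p' pin p'in.
have := SM 0 0 q x2 x2 p q x2 x2 p' qin x2in x2in pin qin x2in x2in p'in.
cbv beta iota delta [Fop].
rewrite (subrr x2) (subrr q) !dotv0l mulmx0 dotv_simp; lra.
Qed.

Lemma vi_combine n (x y Fx Fy : 'rV[R]_n) :
  0 <= dotv (y - x) Fx -> 0 <= dotv (x - y) Fy -> dotv (x - y) (Fx - Fy) <= 0.
Proof.
rewrite dotvBr -(opprB x y) dotvNl; lra.
Qed.

Lemma sq4_eq0 (a s1 s2 s3 s4 : R) : 0 < a -> 0 <= s1 -> 0 <= s2 -> 0 <= s3 -> 0 <= s4 ->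
  a * (s1 + s2 + s3 + s4) <= 0 -> s1 = 0 /\ s2 = 0.
Proof.
move=> a0 h1 h2 h3 h4; rewrite pmulr_rle0 // => hs.
by split; apply/eqP; rewrite eq_le; apply/andP; split; lra.
Qed.

Lemma rqe_unique m1 m2 (G : stage_params R m1 m2) alpha R1 R2 a1 a2 b1 b2 :
  0 < eps1 G -> 0 < eps2 G ->
  diff_nbhd (simplex R m1) (nu1 G) -> diff_nbhd (simplex R m2) (nu2 G) ->
  diff_on2 (simplex R m2) (D1 G) -> diff_on2 (simplex R m1) (D2 G) ->
  0 < alpha -> strongly_monotone G alpha ->
  isRQE G R1 R2 a1 a2 -> isRQE G R1 R2 b1 b2 -> a1 = b1 /\ a2 = b2.
Proof.
move=> e1 e2 dn1 dn2 dD1 dD2 a0 SM [a1in a2in ra1 ra2] [b1in b2in rb1 rb2].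
have [p1a p1ain [VI3a VI1a]] := player_VI (Rm := R1) a0 e1 a1in a2in (diff_nbhd_at dn1)
  (diff_on2_at dD1 a2in) (smon_p1 SM a1in a2in) ra1.
have [p2a p2ain [VI4a VI2a]] := player_VI (Rm := R2) a0 e2 a2in a1in (diff_nbhd_at dn2)
  (diff_on2_at dD2 a1in) (smon_p2 SM a2in a1in) ra2.
have [p1b p1bin [VI3b VI1b]] := player_VI (Rm := R1) a0 e1 b1in b2in (diff_nbhd_at dn1)
  (diff_on2_at dD1 b2in) (smon_p1 SM b1in b2in) rb1.
have [p2b p2bin [VI4b VI2b]] := player_VI (Rm := R2) a0 e2 b2in b1in (diff_nbhd_at dn2)
  (diff_on2_at dD2 b1in) (smon_p2 SM b2in b1in) rb2.
have := SM R1 R2 a1 a2 p1a p2a b1 b2 p1b p2b a1in a2in p1ain p2ain b1in b2in p1bin p2bin.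
cbv beta iota delta [Fop] => H.
have c1 := vi_combine (VI1a _ b1in) (VI1b _ a1in).
have c2 := vi_combine (VI2a _ b2in) (VI2b _ a2in).
have c3 := vi_combine (VI3a _ p1bin) (VI3b _ p1ain).
have c4 := vi_combine (VI4a _ p2bin) (VI4b _ p2ain).
have [h1 h2] : dotv (a1 - b1) (a1 - b1) = 0 /\ dotv (a2 - b2) (a2 - b2) = 0.
  apply: (sq4_eq0 (s3 := dotv (p1a - p1b) (p1a - p1b)) (s4 := dotv (p2a - p2b) (p2a - p2b)) a0 (dotv_ge0 _) (dotv_ge0 _) (dotv_ge0 _) (dotv_ge0 _)).
  lra.
by split; apply/subr0_eq; apply: dotv_eq0.
Qed.

End P5.
Section P6.
Variable R : realType.

Lemma expect_mono (S : finType) (P : S -> R) W W' c : distr R S P ->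
  (forall s, W' s <= W s + c) -> expect P W' <= expect P W + c.
Proof.
move=> [P0 P1] H; rewrite /expect.
have -> : c = \sum_s P s * c by rewrite -mulr_suml P1 mul1r.
rewrite -big_split /=; apply: ler_sum => s _.
by rewrite -mulrDr; apply: ler_wpM2l.
Qed.

Lemma expect_lb (S : finType) (P : S -> R) W : distr R S P ->
  - \sum_s `|W s| <= expect P W.
Proof.
move=> [P0 P1].
have Hc : forall s, - \sum_s `|W s| <= W s.
  move=> s; rewrite lerNl (bigD1 s) //=.
  have : 0 <= \sum_(i | i != s) `|W i| by apply: sumr_ge0.
  have := ler_norm (- W s); rewrite normrN; lra.
have := expect_mono (c := 0) (W := W) (W' := fun _ => - \sum_s `|W s|) (conj P0 P1).
rewrite addr0 => /(_ (fun s => (ltac:(rewrite addr0; exact: Hc)))); rewrite /expect -mulr_suml P1 mul1r; exact.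
Qed.

Lemma robust_mono (S : finType) (Denv : (S -> R) -> (S -> R) -> R) (P0 : S -> R) W W' c :
  distr R S P0 -> (forall P1 P2, distr R S P1 -> distr R S P2 -> 0 <= Denv P1 P2) ->
  (forall s, W' s <= W s + c) ->
  robust_exp Denv P0 W' <= robust_exp Denv P0 W + c.
Proof.
move=> dP0 Dge H; rewrite /robust_exp.
set E' := [set _ | _ in _]; set E := [set _ | _ in _].
have lbE' : has_lbound E'.
  exists (- \sum_s `|W' s|) => y [Pt Ptin <-].
  have := expect_lb W' Ptin; have := Dge _ _ Ptin dP0; lra.
rewrite -lerBlDr; apply: lb_le_inf.
  by exists (expect P0 W + Denv P0 P0), P0.
move=> y [Pt Ptin <-].
have : inf E' <= expect Pt W' + Denv Pt P0 by apply: ge_inf => //; exists Pt.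
have := expect_mono Ptin H; lra.
Qed.

Lemma fval_mono m n (eps : R) (nu : 'rV[R]_m -> R) (D : 'rV[R]_n -> 'rV[R]_n -> R)
  pi q (Q Q' : 'M[R]_(m, n)) c :
  simplex R m pi -> simplex R n q ->
  (forall p, simplex R n p -> differentiable (fun x => D x q) p) ->
  (forall i j, Q' i j <= Q i j + c) ->
  fval eps nu D pi q Q <= fval eps nu D pi q Q' + c.
Proof.
move=> piin qin dD H.
have ne : simplex R n !=set0 by exists q.
have [p pin pmax] := exists_max (pi *m Q) ne dD.
have [p' p'in p'max] := exists_max (pi *m Q') ne dD.
rewrite (fval_max eps nu pin pmax) (fval_max eps nu p'in p'max).
have key : dotv (pi *m Q') p <= dotv (pi *m Q) p + c.
  rewrite -!mulmx00 !mulmx00E.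
  have Ec : \sum_i \sum_j c * (pi 0 i * p 0 j) = c.
    under eq_bigr => i _ do rewrite -mulr_sumr -mulr_sumr.
    rewrite -mulr_sumr -mulr_suml.
    by case: piin => _ ->; case: pin => _ ->; rewrite !mulr1.
  rewrite -[X in _ <= _ + X]Ec.
  rewrite -big_split; apply: ler_sum => i _; rewrite -big_split; apply: ler_sum => j _ /=.
  have hp := simplex_ge0 j pin; have hpi := simplex_ge0 i piin.
  have := ler_wpM2l (mulr_ge0 hpi hp) (H i j).
  rewrite mulrDr => HH; lra.
have := p'max _ pin; lra.
Qed.

End P6.
Section P7.
Variable R : realType.

Lemma contraction (S : finType) m1 m2 (rew : S -> 'I_m1 -> 'I_m2 -> R) (g : R)
  (Denv : (S -> R) -> (S -> R) -> R) (tr : S -> 'I_m1 -> 'I_m2 -> S -> R)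
  (F F' : S -> (S -> 'I_m1 -> 'I_m2 -> R) -> R) V Q V' Q' :
  0 <= g < 1 -> (forall s a1 a2, distr R S (tr s a1 a2)) ->
  (forall P1 P2, distr R S P1 -> distr R S P2 -> 0 <= Denv P1 P2) ->
  (forall s Q1 Q2 c, 0 <= c -> (forall s a1 a2, Q2 s a1 a2 <= Q1 s a1 a2 + c) ->
     F' s Q1 <= F' s Q2 + c) ->
  (forall s, V s = - F s Q) ->
  (forall s a1 a2, Q s a1 a2 = rew s a1 a2 + g * robust_exp Denv (tr s a1 a2) V) ->
  (forall s, V' s = - F' s Q') ->
  (forall s a1 a2, Q' s a1 a2 = rew s a1 a2 + g * robust_exp Denv (tr s a1 a2) V') ->
  (forall s, F s Q <= F' s Q) ->
  forall s, V' s <= V s.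
Proof.
move=> /andP[g0 g1] trd Dge mono HV HQ HV' HQ' Hbr.
set d := \big[Order.max/0]_s (V' s - V s).
have d0 : 0 <= d by apply: bigmax_ge_id.
have Hd : forall s, V' s <= V s + d.
  move=> s; rewrite -lerBlDl /d; first [exact: le_bigmax | exact: (bigmax_sup s) | apply: (bigmax_sup s) =>//].
have HQd : forall s a1 a2, Q' s a1 a2 <= Q s a1 a2 + g * d.
  move=> s a1 a2; rewrite HQ HQ' -addrA lerD2l -mulrDr; apply: ler_wpM2l => //.
  exact: robust_mono.
have Hs : forall s, V' s - V s <= g * d.
  move=> s; have := mono s Q Q' (g * d) (mulr_ge0 g0 d0) HQd.
  have := Hbr s; rewrite HV HV'; lra.
have dle : d <= g * d by apply: bigmax_le => //; apply: mulr_ge0.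
have dle0 : d <= 0.
  have : (1 - g) * d <= 0 by rewrite mulrBl mul1r subr_le0.
  by rewrite pmulr_rle0 // subr_gt0.
by move=> s; have := Hd s; lra.
Qed.

End P7.

Unset Implicit Arguments. Set Strict Implicit.

Theorem proposition3 (R : realType) (S : finType) (m1 m2 : nat)
  (G : stage_params R m1 m2) (M : markov_params R S m1 m2) (alpha : R)
  (Qs1 Qs2 : S -> 'I_m1 -> 'I_m2 -> R)
  (pis1 : S -> 'rV[R]_m1) (pis2 : S -> 'rV[R]_m2) :
  (* rewards in [0,1], discount in [0,1), transition kernel in Delta_S *)
  (forall s a1 a2, 0 <= rew1 M s a1 a2 <= 1) ->
  (forall s a1 a2, 0 <= rew2 M s a1 a2 <= 1) ->
  0 <= gamma M < 1 ->
  (forall s a1 a2, distr R S (trans M s a1 a2)) ->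
  (* environment penalties are nonnegative *)
  (forall P1 P2, distr R S P1 -> distr R S P2 -> 0 <= Denv1 M P1 P2) ->
  (forall P1 P2, distr R S P1 -> distr R S P2 -> 0 <= Denv2 M P1 P2) ->
  (* stage-game regularisers *)
  0 < eps1 G -> 0 < eps2 G ->
  diff_nbhd (simplex R m1) (nu1 G) -> strictly_convex_on (simplex R m1) (nu1 G) ->
  diff_nbhd (simplex R m2) (nu2 G) -> strictly_convex_on (simplex R m2) (nu2 G) ->
  diff_on2 (simplex R m2) (D1 G) -> convex_first_on (simplex R m2) (D1 G) ->
  diff_on2 (simplex R m1) (D2 G) -> convex_first_on (simplex R m1) (D2 G) ->
  (* the modified 4-player game is alpha-strongly monotone *)
  0 < alpha -> strongly_monotone G alpha ->
  (* Q* is the unique fixed point of the Bellman operator T *)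
  bellman G M Qs1 Qs2 = (Qs1, Qs2) ->
  (forall Q1 Q2, bellman G M Q1 Q2 = (Q1, Q2) -> Q1 = Qs1 /\ Q2 = Qs2) ->
  (* pi*(. | s) is the (unique) RQE of the stage game Q*(s, .) *)
  (forall s, isRQE G (Qmat1 Qs1 s) (Qmat2 Qs2 s) (pis1 s) (pis2 s)) ->
  markov_RQE G M pis1 pis2.
Proof.
move=> r1 r2 g01 trd De1 De2 e1 e2 dn1 sc1 dn2 sc2 dD1 cv1 dD2 cv2 a0 SM bell uniqB rqe.
have pair_eq : forall s, rqe_pair G (Qmat1 Qs1 s) (Qmat2 Qs2 s) = (pis1 s, pis2 s).
  move=> s; rewrite /rqe_pair; case: pselect => [H|H]; last first.
    by exfalso; apply: H; exists (pis1 s, pis2 s).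
  case: (cid H) => [[z1 z2] /= Hz].
  by have [<- <-] := rqe_unique e1 e2 dn1 dn2 dD1 dD2 a0 SM (rqe s) Hz.
have RQE1E : forall s, RQE1 G (Qmat1 Qs1 s) (Qmat2 Qs2 s) = f1 G (pis1 s) (pis2 s) (Qmat1 Qs1 s).
  by move=> s; rewrite /RQE1 pair_eq.
have RQE2E : forall s, RQE2 G (Qmat1 Qs1 s) (Qmat2 Qs2 s) = f2 G (pis2 s) (pis1 s) (Qmat2 Qs2 s).
  by move=> s; rewrite /RQE2 pair_eq.
have Qs1E : forall s a1 a2, Qs1 s a1 a2 = rew1 M s a1 a2 + gamma M *
    robust_exp (Denv1 M) (trans M s a1 a2) (fun s' => - f1 G (pis1 s') (pis2 s') (Qmat1 Qs1 s')).
  move=> s a1 a2; have := congr1 (fun P => P.1 s a1 a2) bell; rewrite /bellman /= => <-.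
  by congr (_ + _ * _); congr robust_exp; apply/funext => s'; rewrite RQE1E.
have Qs2E : forall s a1 a2, Qs2 s a1 a2 = rew2 M s a1 a2 + gamma M *
    robust_exp (Denv2 M) (trans M s a1 a2) (fun s' => - f2 G (pis2 s') (pis1 s') (Qmat2 Qs2 s')).
  move=> s a1 a2; have := congr1 (fun P => P.2 s a1 a2) bell; rewrite /bellman /= => <-.
  by congr (_ + _ * _); congr robust_exp; apply/funext => s'; rewrite RQE2E.
have pol1 : markov_policy pis1 by move=> s; case: (rqe s).
have pol2 : markov_policy pis2 by move=> s; case: (rqe s).
have mono1 : forall pi1 : S -> 'rV[R]_m1, markov_policy pi1 -> forall s Q1 Q2 c, 0 <= c ->
    (forall s a1 a2, Q2 s a1 a2 <= Q1 s a1 a2 + c) ->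
    f1 G (pi1 s) (pis2 s) (Qmat1 Q1 s) <= f1 G (pi1 s) (pis2 s) (Qmat1 Q2 s) + c.
  move=> pi1 p1 s Q1 Q2 c c0 H; apply: fval_mono => //.
    exact: (diff_on2_at dD1 (pol2 s)).
  by move=> i j; rewrite !mxE.
have mono2 : forall pi2 : S -> 'rV[R]_m2, markov_policy pi2 -> forall s Q1 Q2 c, 0 <= c ->
    (forall s a1 a2, Q2 s a1 a2 <= Q1 s a1 a2 + c) ->
    f2 G (pi2 s) (pis1 s) (Qmat2 Q1 s) <= f2 G (pi2 s) (pis1 s) (Qmat2 Q2 s) + c.
  move=> pi2 p2 s Q1 Q2 c c0 H; apply: fval_mono => //.
    exact: (diff_on2_at dD2 (pol1 s)).
  by move=> i j; rewrite !mxE.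
split; first exact: pol1.
split; first exact: pol2.
split.
  move=> pi1' pol1' V Q V' Q' [HV HQ] [HV' HQ'].
  have VE : V = (fun s => - f1 G (pis1 s) (pis2 s) (Qmat1 Qs1 s)).
    apply/funext => s; apply/eqP; rewrite eq_le; apply/andP; split.
      apply: (contraction (F := fun s Q => f1 G (pis1 s) (pis2 s) (Qmat1 Q s))
        (F' := fun s Q => f1 G (pis1 s) (pis2 s) (Qmat1 Q s)) g01 trd De1 (mono1 _ pol1)
        (V := fun s => - f1 G (pis1 s) (pis2 s) (Qmat1 Qs1 s)) (Q := Qs1) _ Qs1E HV HQ) => //.
    apply: (contraction (F := fun s Q => f1 G (pis1 s) (pis2 s) (Qmat1 Q s))
        (F' := fun s Q => f1 G (pis1 s) (pis2 s) (Qmat1 Q s)) g01 trd De1 (mono1 _ pol1)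
        HV HQ (V' := fun s => - f1 G (pis1 s) (pis2 s) (Qmat1 Qs1 s)) (Q' := Qs1) _ Qs1E) => //.
  have QE : Q = Qs1.
    by apply/funext => s; apply/funext => a1; apply/funext => a2; rewrite HQ Qs1E VE.
  apply: (contraction (F := fun s Q => f1 G (pis1 s) (pis2 s) (Qmat1 Q s))
        (F' := fun s Q => f1 G (pi1' s) (pis2 s) (Qmat1 Q s)) g01 trd De1 (mono1 _ pol1')
        HV HQ HV' HQ').
  move=> s; rewrite QE /=.
  by case: (rqe s) => _ _ H _; apply: H.
move=> pi2' pol2' V Q V' Q' [HV HQ] [HV' HQ'].
have VE : V = (fun s => - f2 G (pis2 s) (pis1 s) (Qmat2 Qs2 s)).
  apply/funext => s; apply/eqP; rewrite eq_le; apply/andP; split.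
    apply: (contraction (F := fun s Q => f2 G (pis2 s) (pis1 s) (Qmat2 Q s))
      (F' := fun s Q => f2 G (pis2 s) (pis1 s) (Qmat2 Q s)) g01 trd De2 (mono2 _ pol2)
      (V := fun s => - f2 G (pis2 s) (pis1 s) (Qmat2 Qs2 s)) (Q := Qs2) _ Qs2E HV HQ) => //.
  apply: (contraction (F := fun s Q => f2 G (pis2 s) (pis1 s) (Qmat2 Q s))
      (F' := fun s Q => f2 G (pis2 s) (pis1 s) (Qmat2 Q s)) g01 trd De2 (mono2 _ pol2)
      HV HQ (V' := fun s => - f2 G (pis2 s) (pis1 s) (Qmat2 Qs2 s)) (Q' := Qs2) _ Qs2E) => //.
have QE : Q = Qs2.
  by apply/funext => s; apply/funext => a1; apply/funext => a2; rewrite HQ Qs2E VE.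
apply: (contraction (F := fun s Q => f2 G (pis2 s) (pis1 s) (Qmat2 Q s))
      (F' := fun s Q => f2 G (pi2' s) (pis1 s) (Qmat2 Q s)) g01 trd De2 (mono2 _ pol2')
      HV HQ HV' HQ').
move=> s; rewrite QE /=.
by case: (rqe s) => _ _ _ H; apply: H.
Qed.
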